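(* Let $\theta=(k_r)$ be a lacunary sequence, $m\ge0$ an integer, $p>0$ and $0<\beta\le1$. If $\limsup_r\frac{k_r}{k_{r-1}^\beta}<\infty$, then $N_\theta(p,F,\Delta^m)\subseteq w_p^\beta(F,\Delta^m)$.
   Context: A fuzzy number is a map $X:\mathbb{R}\to[0,1]$ which is normal, fuzzy convex, upper semicontinuous, with compact closure of $\{t:X(t)>0\}$; $L(\mathbb{R})$ is the set of fuzzy numbers. Level sets $[X]^\alpha=\{t:X(t)\ge\alpha\}$ ($\alpha\in(0,1]$), $[X]^0=\overline{\{t:X(t)>0\}}$, are compact intervals $[u^\alpha,v^\alpha]$. Subtraction: $[X-Y]^\alpha=[u_1^\alpha-v_2^\alpha,v_1^\alpha-u_2^\alpha]$. Metric: $d(X,Y)=\sup_{\alpha\in[0,1]}\max\{|u_1^\alpha-u_2^\alpha|,|v_1^\alpha-v_2^\alpha|\}$. $(\Delta^0X)_k=X_k$, $(\Delta^1X)_k=X_k-X_{k+1}$, $(\Delta^mX)_k=(\Delta^1(\Delta^{m-1}X))_k$. A lacunary sequence is an increasing integer sequence $\theta=(k_r)_{r\ge0}$ with $k_0=0$, $h_r=k_r-k_{r-1}\to\infty$; $I_r=(k_{r-1},k_r]$. $N_\theta(p,F,\Delta^m)$: sequences $X$ of fuzzy numbers with some $X_0\in L(\mathbb{R})$ such that $\lim_r\frac{1}{h_r}\sum_{k\in I_r}d(\Delta^mX_k,X_0)^p=0$. $w_p^\beta(F,\Delta^m)$: sequences $X$ with some $X_0\in L(\mathbb{R})$ such that $\lim_{n\to\infty}\frac{1}{n^\beta}\sum_{k=1}^n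 d(\Delta^mX_k,X_0)^p=0$. *)

(* Defs.v *)
From HB Require Import structures.
From mathcomp Require Import all_boot all_order all_algebra.
From mathcomp Require Import all_classical all_reals all_analysis.
Set Implicit Arguments. Unset Strict Implicit. Unset Printing Implicit Defensive.
Import Order.TTheory GRing.Theory Num.Theory.
Import numFieldNormedType.Exports.
Local Open Scope classical_set_scope.
Local Open Scope ring_scope.

Section Fuzzy.
Variable R : realType.

Definition fuzzy_number (X : R -> R) : Prop :=
  [/\ (forall t, 0 <= X t <= 1),
      (exists t, X t = 1),
      (forall s t l, 0 <= l <= 1 ->
          Num.min (X s) (X t) <= X (l * s + (1 - l) * t)),
      (forall t (e : R), 0 < e -> \forall s \near t, X s < X t + e) &
      compact (closure [set t | 0 < X t])].

Definition level (X : R -> R) (a : R) : set R :=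
  if a == 0 then closure [set t | 0 < X t] else [set t | a <= X t].

Definition lo (X : R -> R) (a : R) : R := inf (level X a).
Definition hi (X : R -> R) (a : R) : R := sup (level X a).

(* Subtraction: the fuzzy number whose a-level sets are
   [lo X a - hi Y a, hi X a - lo Y a]; its membership function is
   recovered from the level sets as t |-> sup {a in (0,1] | t in [X-Y]^a}
   (0 if there is no such a). *)
Definition fsub (X Y : R -> R) : R -> R := fun t =>
  sup [set a | 0 < a <= 1 /\ lo X a - hi Y a <= t <= hi X a - lo Y a].

Definition fdist (X Y : R -> R) : R :=
  sup [set x | exists2 a, 0 <= a <= 1 &
        x = Num.max `|lo X a - lo Y a| `|hi X a - hi Y a|].

Fixpoint fdelta (m : nat) (X : nat -> R -> R) : nat -> R -> R :=
  match m with
  | 0 => X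
  | m'.+1 => fun k => fsub (fdelta m' X k) (fdelta m' X k.+1)
  end.

End Fuzzy.

Definition hlac (theta : nat -> nat) (r : nat) : nat := (theta r - theta r.-1)%N.

Definition lacunary (theta : nat -> nat) : Prop :=
  [/\ theta 0 = 0%N, (forall r, (theta r < theta r.+1)%N) &
      (hlac theta) @ \oo --> \oo].

(* N_theta(p,F,Delta^m); the sum is over k in I_r = (k_{r-1}, k_r] *)
Definition N_theta (R : realType) (theta : nat -> nat) (p : R) (m : nat)
    (X : nat -> R -> R) : Prop :=
  exists X0 : R -> R, fuzzy_number X0 /\
    (fun r => (hlac theta r)%:R^-1 *
       \sum_((theta r.-1).+1 <= k < (theta r).+1)
          fdist (fdelta m X k) X0 `^ p) @ \oo --> (0 : R).

Definition w_beta (R : realType) (beta p : R) (m : nat)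
    (X : nat -> R -> R) : Prop :=
  exists X0 : R -> R, fuzzy_number X0 /\
    (fun n : nat => (n%:R `^ beta)^-1 *
       \sum_(1 <= k < n.+1) fdist (fdelta m X k) X0 `^ p) @ \oo --> (0 : R).

(* Main.v *)
Require Import Defs.
From HB Require Import structures.
From mathcomp Require Import all_boot all_order all_algebra.
From mathcomp Require Import all_classical all_reals all_analysis.
From mathcomp Require Import ring lra.
Import Order.TTheory GRing.Theory Num.Theory.
Import numFieldNormedType.Exports.
Local Open Scope classical_set_scope.
Local Open Scope ring_scope.

Section H.
Variable theta : nat -> nat.
Hypothesis th0 : theta 0 = 0%N.
Hypothesis thS : forall r, (theta r < theta r.+1)%N.

Lemma theta_ge r : (r <= theta r)%N.
Proof. elim: r => [//|r IH]; exact: leq_ltn_trans IH (thS r). Qed.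

Lemma theta_add r k : (theta r <= theta (r + k))%N.
Proof.
elim: k => [|k IH]; first by rewrite addn0.
rewrite addnS; exact: leq_trans IH (ltnW (thS _)).
Qed.

Lemma theta_mono {r1 r2} : (r1 <= r2)%N -> (theta r1 <= theta r2)%N.
Proof. by move=> h; rewrite -(subnKC h); apply: theta_add. Qed.

Lemma find_r {n} : (0 < n)%N -> exists r, [/\ (0 < r)%N, (theta r.-1 < n)%N & (n <= theta r)%N].
Proof.
move=> n0.
have ex : exists r, (n <= theta r)%N by exists n; apply: theta_ge.
case: (ex_minnP ex) => r hr hmin.
exists r; split => //.
  case: r hr hmin => [|r] //; by rewrite th0 leqNgt n0.
rewrite ltnNge; apply/negP => h.
have := hmin _ h; case: r hr hmin h => [|r] //=; first by rewrite th0 leqNgt n0.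
by rewrite ltnn.
Qed.

Variable R : realType.
Variable a : nat -> R.
Hypothesis a0 : forall k, 0 <= a k.

Definition S N := \sum_(1 <= k < N.+1) a k.

Lemma S_mono {n N} : (n <= N)%N -> S n <= S N.
Proof.
move=> h; rewrite /S [X in _ <= X](big_cat_nat _ (n:=n.+1)) //=.
by rewrite lerDl; apply: sumr_ge0.
Qed.
Lemma dummy : True. Proof. by [].
Qed.

Lemma S_split r : S (theta r.+1) =
  S (theta r) + \sum_((theta r).+1 <= k < (theta r.+1).+1) a k.
Proof. rewrite /S [LHS](big_cat_nat _ (n:=(theta r).+1)) //=. all: try exact: ltnW (thS _). Qed.

Lemma cesaro {d : R} : 0 < d ->
  (fun r => (hlac theta r)%:R^-1 *
       \sum_((theta r.-1).+1 <= k < (theta r).+1) a k) @ \oo --> (0 : R) ->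
  exists R0, forall r, (R0 <= r)%N -> S (theta r) <= d * (theta r)%:R.
Proof.
move=> d0 /cvgrPdist_lt /(_ (d/2)) [|J _ HJ]; first by rewrite divr_gt0.
have key : forall i, S (theta (J+i)) <= S (theta J) +
    d/2 * ((theta (J+i))%:R - (theta J)%:R).
  elim=> [|i IH]; first by rewrite addn0 subrr mulr0 addr0.
  rewrite addnS S_split.
  set r := (J + i)%N.
  have hr : (J <= r.+1)%N by apply: leqW; apply: leq_addr.
  have := HJ _ hr; rewrite /= sub0r normrN.
  set B := \sum_(_ <= k < _) a k.
  have hpos : (0 < hlac theta r.+1)%N by rewrite /hlac subn_gt0.
  have Bge : 0 <= B by apply: sumr_ge0.
  rewrite ger0_norm ?mulr_ge0 ?invr_ge0 ?ler0n //.
  rewrite mulrC ltr_pdivrMr ?ltr0n // => hB.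
  have -> : (theta r.+1)%:R - (theta J)%:R =
     ((theta r)%:R - (theta J)%:R) + (hlac theta r.+1)%:R :> R.
    by rewrite /hlac natrB ?(ltnW (thS _)) //=; ring.
  rewrite mulrDr addrA; apply: lerD => //; exact: ltW.
set C := S (theta J) / (d/2).
exists (maxn J (Num.trunc C).+1) => r.
rewrite geq_max => /andP[hJ hC].
have := key (r - J)%N; rewrite subnKC //.
move=> h; apply: (le_trans h).
have h2 : S (theta J) <= d/2 * (theta r)%:R.
  rewrite mulrC -ler_pdivrMr ?divr_gt0 //.
  apply: (le_trans (ltW (truncnS_gt C))).
  rewrite ler_nat; exact: leq_trans hC (theta_ge r).
have h3 : 0 <= (theta J)%:R :> R by [].
rewrite mulrBr.
have -> : d * (theta r)%:R = d/2 * (theta r)%:R + d/2 * (theta r)%:R by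
  rewrite -mulrDl -splitr.
have : 0 <= d/2 * (theta J)%:R by rewrite mulr_ge0 // divr_ge0 // ltW.
lra.
Qed.

Lemma main_abs (beta M : R) : 0 < beta ->
  (\forall r \near \oo, (theta r)%:R / ((theta r.-1)%:R `^ beta) <= M) ->
  (fun r => (hlac theta r)%:R^-1 *
       \sum_((theta r.-1).+1 <= k < (theta r).+1) a k) @ \oo --> (0 : R) ->
  (fun n : nat => (n%:R `^ beta)^-1 * \sum_(1 <= k < n.+1) a k) @ \oo --> (0 : R).
Proof.
move=> b0 [R2 _ HM] HT; apply/cvgrPdist_lt => e e0.
set M' := Num.max M 1.
have M'1 : 1 <= M' by rewrite /M' le_max lexx orbT.
have M'0 : 0 < M' by apply: lt_le_trans M'1.
have MM' : M <= M' by rewrite /M' le_max lexx.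
set dl := e / (2 * M').
have dl0 : 0 < dl by rewrite divr_gt0 // mulr_gt0.
have [R1 HR1] := cesaro dl0 HT.
set R0 := maxn (maxn R1 R2) 1.
exists (theta R0).+1 => // n hn.
have n0 : (0 < n)%N by apply: leq_trans hn.
have [r [r0 hlo hhi]] := find_r n0.
have rR0 : (R0 < r)%N.
  rewrite ltnNge; apply/negP => h.
  have := leq_trans hhi (theta_mono h).
  by rewrite leqNgt hn.
have rR1 : (R1 <= r)%N.
  apply: leq_trans (ltnW rR0); by rewrite /R0 !leq_max leqnn.
have rR2 : (R2 <= r)%N.
  apply: leq_trans (ltnW rR0); by rewrite /R0 !leq_max leqnn orbT.
have r1 : (1 <= r.-1)%N.
  rewrite -ltnS prednK //; apply: leq_ltn_trans rR0; by rewrite /R0 leq_max leqnn orbT.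
have th1 : (1 <= theta r.-1)%N by apply: leq_trans r1 (theta_ge _).
have P0 : 0 < (theta r.-1)%:R `^ beta by apply: powR_gt0; rewrite ltr0n.
have hM := HM r rR2; rewrite /= ler_pdivrMr // in hM.
have Pn : (theta r.-1)%:R `^ beta <= n%:R `^ beta.
  apply: ge0_ler_powR; [exact: ltW|by rewrite nnegrE|by rewrite nnegrE|].
  by rewrite ler_nat ltnW.
have nb0 : 0 < n%:R `^ beta by apply: (lt_le_trans P0).
have Sn : S n <= dl * M' * n%:R `^ beta.
  apply: (le_trans (S_mono (hhi))).
  apply: (le_trans (HR1 r rR1)).
  rewrite -mulrA ler_pM2l //.
  apply: (le_trans hM); apply: (@le_trans _ _ (M' * (theta r.-1)%:R `^ beta)).
    by apply: ler_wpM2r => //; exact: ltW.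
  by apply: ler_wpM2l => //; exact: ltW.
have Sge : 0 <= S n by apply: sumr_ge0.
rewrite /= sub0r normrN ger0_norm; last by rewrite mulr_ge0 // invr_ge0 ltW.
rewrite mulrC ltr_pdivrMr //.
apply: (le_lt_trans Sn); rewrite ltr_pM2r //.
rewrite /dl.
have -> : e / (2 * M') * M' = e / 2 by field; rewrite gt_eqF.
rewrite ltr_pdivrMr // ltr_pMr //; lra.
Qed.
End H.

Theorem theorem2p15 (R : realType) (theta : nat -> nat) (m : nat) (p beta : R)
    (X : nat -> R -> R) :
  lacunary theta -> 0 < p -> 0 < beta <= 1 ->
  (exists M : R, \forall r \near \oo,
      (theta r)%:R / ((theta r.-1)%:R `^ beta) <= M) ->
  (forall k, fuzzy_number (X k)) ->
  N_theta theta p m X -> w_beta beta p m X.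
Proof.
move=> [th0 thS _] _ /andP[b0 _] [M HM] _ [X0 [fX0 HT]].
exists X0; split => //.
have a0 : forall k, 0 <= (fun k => fdist (fdelta m X k) X0 `^ p) k.
  by move=> k; apply: powR_ge0.
exact: (@main_abs theta th0 thS R _ a0 beta M b0 HM HT).
Qed.
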